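(* Let $r \in \mathbb{Z}_{\geqslant 2}$. For any real number $x \geqslant 1$, $$\sum_{n_1 \leqslant x, \dotsc, n_r \leqslant x} \mu \left( n_1 \dotsb n_r \right) \left \lfloor \frac{x}{n_1 \dotsb n_r} \right \rfloor = \sum_{n \leqslant x} (1-r)^{\omega(n)},$$ where the sum on the left runs over all $r$-tuples of positive integers $n_1,\dots,n_r \leqslant x$.
   Context: $\mu$ is the Möbius function, $\omega(n)$ is the number of distinct prime factors of $n$ (with $\omega(1)=0$), and $\lfloor \cdot \rfloor$ is the integer part. *)

(* Defs.v *)
From mathcomp Require Import all_boot all_order all_algebra.
Set Implicit Arguments. Unset Strict Implicit. Unset Printing Implicit Defensive.
Import Order.TTheory GRing.Theory Num.Theory.

(* Moebius function: mu 0 = 0 (convention, never used), mu n = 0 if n has a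
   square prime factor, else (-1)^(number of distinct primes). *)
Definition moebius (n : nat) : int :=
  if n == 0%N then 0%R
  else if [exists p : 'I_n.+1, prime p && (p * p %| n)%N] then 0%R
  else ((-1) ^+ size (primes n))%R.

Definition omega (n : nat) : nat := size (primes n).

(* Main.v *)
Require Import Defs.
From mathcomp Require Import all_boot all_order all_algebra.
From mathcomp Require Import reals.
Import Order.TTheory GRing.Theory Num.Theory.

Lemma dvdn_from_log m k : (0 < m)%N -> (0 < k)%N ->
  (forall p, logn p m <= logn p k)%N -> (m %| k)%N.
Proof.
move=> m0 k0 H; have -> : m = gcdn m k.
  apply: eqn_from_log => //; first by rewrite gcdn_gt0 m0.
  by move=> p; rewrite logn_gcd //; apply/esym/minn_idPl.
exact: dvdn_gcdr.
Qed.

Lemma moebius_neq0 m : moebius m != 0%R -> (0 < m)%N /\ forall p, (logn p m <= 1)%N.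
Proof.
rewrite /moebius; case: (m =P 0%N) => [->|/eqP m0] /=; first by move=> /eqP.
move=> H; rewrite lt0n m0; split => //.
move=> p; rewrite leqNgt; apply/negP => H2.
have pp : prime p by move: H2; rewrite /logn; case: (prime p).
have pd : (p ^ 2 %| m)%N by rewrite pfactor_dvdn // lt0n.
move: H; case: existsP => // -[].
have pm : (p <= m)%N by apply: dvdn_leq; rewrite ?lt0n //; apply: dvdn_trans pd; rewrite dvdn_exp.
exists (Ordinal (n:=m.+1) (m:=p) pm) => /=; rewrite pp /=.
by move: pd; rewrite expnS expn1.
Qed.

Arguments moebius_neq0 {m}.
Section Core.
Variable k : nat.
Hypothesis k0 : (0 < k)%N.
Let s := primes k.
Let n := size s.
Definition pr (j : 'I_n) := nth 0%N s j.

Lemma pr_mem j : pr j \in primes k.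
Proof. exact: mem_nth. Qed.

Lemma pr_prime j : prime (pr j).
Proof. by have := pr_mem j; rewrite mem_primes => /andP[]. Qed.

Lemma pr_inj : injective pr.
Proof. by move=> i j /eqP; rewrite /pr nth_uniq ?primes_uniq // => /eqP/val_inj. Qed.

Definition Q (B : pred 'I_n) := (\prod_(j | B j) pr j)%N.

Lemma Q_gt0 B : (0 < Q B)%N.
Proof. by apply: prodn_gt0 => j; apply: prime_gt0; apply: pr_prime. Qed.

Lemma logn_Q q B : logn q (Q B) = [exists j, B j && (q == pr j)].
Proof.
have -> : logn q (Q B) = (\sum_(j | B j) (q == pr j))%N.
  rewrite /Q; apply/eqP; set K := fun a b => (0 < a)%N && (logn q a == b).
  apply: (@proj2 (0 < \prod_(j | B j) pr j)%N); apply/andP.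
  apply: (big_rec2 K) => [|j a b _ /andP[a0 /eqP <-]]; first by rewrite /K logn1.
  rewrite /K muln_gt0 a0 prime_gt0 ?pr_prime //= (lognM q (prime_gt0 (pr_prime j)) a0).
  by rewrite (logn_prime q (pr_prime j)).
case: (boolP [exists j, B j && (q == pr j)]) => [/existsP[j0 /andP[Bj0 /eqP qE]] | /existsP H].
  rewrite qE.
  rewrite (bigD1 j0) //= eqxx big1 // => j /andP[_ nj].
  by case: eqP => // /pr_inj eqj; rewrite eqj eqxx in nj.
rewrite big1 // => j Bj; case: eqP => // E; case: H; exists j; rewrite Bj /=.
by rewrite E.
Qed.

Lemma Q_dvd B : (Q B %| k)%N.
Proof.
apply: dvdn_from_log => //; first exact: Q_gt0.
move=> p; rewrite logn_Q; case: (boolP [exists j, B j && (p == pr j)]) => // /existsP[j /andP[_ /eqP ->]].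
by rewrite logn_gt0 pr_mem.
Qed.

Lemma moebius_Q B : moebius (Q B) = ((-1) ^+ #|B|)%R.
Proof.
rewrite /moebius; have /negbTE -> : Q B != 0%N by rewrite -lt0n Q_gt0.
case: existsP => [[p /andP[pp pd]] | _].
  have := pd; rewrite -(expn1 p) -expnS pfactor_dvdn ?Q_gt0 // logn_Q.
  by case: ([exists _, _]).
congr (_ ^+ _)%R; rewrite cardE -(size_map pr); apply: perm_size.
apply: uniq_perm; first exact: primes_uniq.
  rewrite map_inj_uniq ?enum_uniq //; exact: pr_inj.
move=> p; rewrite -logn_gt0 logn_Q; apply/idP/mapP.
  by case: (boolP [exists j, B j && (p == pr j)]) => // /existsP[j /andP[Bj /eqP ->]] _; exists j; rewrite ?mem_enum.
by move=> [j]; rewrite mem_enum => Bj ->; case: (boolP [exists j0, B j0 && (pr j == pr j0)]) => // /existsP[]; exists j; apply/andP; split; [exact: Bj | exact: eqxx].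
Qed.


Variables N r : nat.
Hypothesis kN : (k <= N)%N.
Local Notation T := {ffun 'I_r -> 'I_N.+1}.
Local Notation F := {ffun 'I_n -> option 'I_r}.

Definition Phi (f : F) : T := [ffun i => inord (Q (fun j => f j == Some i))].
Definition Psi (t : T) : F := [ffun j => [pick i | (pr j %| t i)%N]].

Lemma Phi_val f i : (Phi f i : nat) = Q (fun j => f j == Some i).
Proof.
by rewrite ffunE inordK // ltnS; apply: leq_trans (dvdn_leq k0 (Q_dvd _)) kN.
Qed.

Lemma prod_Phi f : (\prod_i (Phi f i : nat))%N = Q (fun j => f j != None).
Proof.
under eq_bigr do rewrite Phi_val.
rewrite /Q [RHS]big_mkcond; under eq_bigr do rewrite big_mkcond.
rewrite exchange_big /=; apply: eq_bigr => j _; case: (f j) => [i0|] /=.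
  rewrite (bigD1 i0) //= eqxx big1 ?muln1 // => i ni.
  by case: eqP => // -[E]; rewrite E eqxx in ni.
by rewrite big1.
Qed.

Lemma Psi_some t j i : Psi t j = Some i -> (pr j %| t i)%N.
Proof. by rewrite ffunE; case: pickP => // i' H [<-]. Qed.

Lemma dvd_pr_Q j (B : pred 'I_n) : (pr j %| Q B)%N = B j.
Proof.
have -> : (pr j %| Q B)%N = (0 < logn (pr j) (Q B))%N.
  by rewrite logn_gt0 mem_primes pr_prime Q_gt0.
rewrite logn_Q; case: (boolP [exists j', B j' && (pr j == pr j')]).
  by move=> /existsP[j' /andP[Bj' /eqP/pr_inj ->]].
by move=> /existsP H; apply/esym/negP => Bj; apply: H; exists j; rewrite Bj eqxx.
Qed.

Lemma core_sum :
  (\sum_(t : T | [forall i, (0 < t i)%N] && (\prod_i (t i : nat) %| k)%N)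
     moebius (\prod_i (t i : nat)) = (1 - r%:Z) ^+ n)%R.
Proof.
rewrite (bigID (fun t : T => moebius (\prod_i (t i : nat)) == 0%R)) /=.
rewrite big1 ?add0r; last by move=> t /andP[_ /eqP].
rewrite (reindex_onto Phi Psi); last first.
  move=> t /andP[/andP[/forallP pos dk] mu].
  have [m0 lg] := moebius_neq0 mu.
  apply/ffunP => i; apply: val_inj; rewrite /= Phi_val; apply: eqn_from_log.
  - exact: Q_gt0.
  - exact: pos.
  have disj : forall i' p, prime p -> (p %| t i)%N -> (p %| t i')%N -> i' = i.
    move=> i' p pp d1 d2; apply/eqP; apply: contraT => ni.
    have : (p ^ 2 %| \prod_i0 (t i0 : nat))%N.
      rewrite (bigD1 i) //= (bigD1 i' ni) /= mulnA expnS expn1.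
      by apply: dvdn_mulr; apply: dvdn_mul.
    by rewrite pfactor_dvdn // leqNgt ltnS lg.
  move=> p; rewrite logn_Q.
  have tim : (t i %| \prod_i0 (t i0 : nat))%N by rewrite (bigD1 i) //= dvdn_mulr.
  case: (posnP (logn p (t i))) => [L0 | Lp].
    rewrite L0; case: existsP => // -[j /andP[/eqP /Psi_some Pj /eqP pE]].
    move: L0; rewrite pE => /eqP; rewrite -[_ == 0]negbK -lt0n logn_gt0 mem_primes.
    by rewrite pr_prime pos Pj.
  have := Lp; rewrite logn_gt0 mem_primes => /and3P[pp _ pti].
  have Le1 : logn p (t i) = 1%N.
    apply/eqP; rewrite eqn_leq Lp andbT; apply: leq_trans (lg p).
    exact: dvdn_leq_log.
  rewrite Le1; case: existsP => // -[].
  have pk : p \in primes k.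
    by rewrite mem_primes pp k0 (dvdn_trans pti (dvdn_trans tim dk)).
  have ix : (index p s < n)%N by rewrite index_mem.
  exists (Ordinal ix); rewrite /pr /= nth_index // eqxx andbT.
  rewrite ffunE; case: pickP => [i' Hi' | H].
    by rewrite /pr /= nth_index // in Hi'; rewrite (disj i' p).
  by have := H i; rewrite /pr /= nth_index // pti.
rewrite (eq_bigl xpredT); last first.
  move=> f /=; apply/idP; rewrite prod_Phi moebius_Q signr_eq0 Q_dvd /= !andbT.
  apply/andP; split.
    by apply/forallP => i; rewrite Phi_val Q_gt0.
  apply/eqP/ffunP => j; rewrite ffunE.
  case: pickP => [i Hi | H].
    by rewrite Phi_val dvd_pr_Q in Hi; apply/esym/eqP.
  case E: (f j) => [i|] //; have := H i; rewrite Phi_val dvd_pr_Q E eqxx //.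
under eq_bigr do rewrite prod_Phi moebius_Q -prodr_const big_mkcond /=.
rewrite -(bigA_distr_bigA (fun (j : 'I_n) (o : option 'I_r) => if o != None then (-1 : int) else 1)%R) /=.
rewrite prodr_const card_ord; congr (_ ^+ _)%R.
rewrite (bigD1 None) //= (reindex_omap Some id) /=; last by move=> o; case: o.
rewrite (eq_bigl xpredT) => [|j /=]; last exact: eqxx.
by rewrite sumrN sumr_const card_ord natz.
Qed.

End Core.

Local Open Scope ring_scope.

Lemma cnt m N : (0 < m)%N -> (\sum_(k < N.+1 | (0 < k)%N) (m %| k))%N = (N %/ m)%N.
Proof.
move=> m0; rewrite big_mkcond /=; elim: N => [|N IH].
  by rewrite big_ord_recr big_ord0 /= div0n.
by rewrite big_ord_recr /= IH divnS // addnC.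
Qed.

Lemma my_floor_div (R : realType) (x : R) N m : Num.floor x = N%:Z -> (0 < m)%N ->
  Num.floor (x / m%:R) = (N %/ m)%N%:Z.
Proof.
move=> hN m0; apply: Num.Theory.floor_def.
have := Num.Theory.floor_itv x; rewrite hN => /andP[a b].
have mR : (0 : R) < m%:R by rewrite ltr0n.
rewrite ler_pdivlMr // ltr_pdivrMr //; apply/andP; split.
  apply: le_trans a; rewrite -[((N %/ m)%N%:Z)%:~R]/((N %/ m)%:R) -natrM.
  by rewrite -[(N%:Z)%:~R]/(N%:R) ler_nat leq_trunc_div.
apply: (lt_le_trans b).
rewrite -PoszD -[(_ + 1)%:Z%:~R]/((_ + 1)%:R) -PoszD -[(_ + 1)%:Z%:~R]/((_ + 1)%:R).
by rewrite -natrM ler_nat !addn1 ltn_ceil.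
Qed.

Theorem theorem1p1 (R : realType) (r : nat) (x : R)
  (hr : (2 <= r)%N) (hx : 1 <= x) :
  let M := (`|Num.floor x|%N).+1 in
  \sum_(t : {ffun 'I_r -> 'I_M} | [forall i, (0 < (t i : nat))%N && ((t i : nat)%:R <= x)])
      moebius (\prod_(i < r) (t i : nat)) * Num.floor (x / (\prod_(i < r) (t i : nat))%:R)
  = \sum_(n < M | (0 < n)%N && (n%:R <= x)) (1 - r%:Z) ^+ omega n.
Proof.
move=> M; rewrite {}/M; set N := `|Num.floor x|%N.
have hN : Num.floor x = N%:Z.
  by rewrite /N gez0_abs // Num.Theory.floor_ge0 (le_trans _ hx).
have hNx : (N%:R : R) <= x by have := Num.Theory.floor_le x; rewrite hN.
have leN : forall k : 'I_N.+1, (k%:R : R) <= x.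
  by move=> k; apply: le_trans hNx; rewrite ler_nat -ltnS.
rewrite (eq_bigl (fun t : {ffun 'I_r -> 'I_N.+1} => [forall i, (0 < t i)%N])); last first.
  by move=> t; apply: eq_forallb => i; rewrite leN andbT.
rewrite [RHS](eq_bigl (fun k : 'I_N.+1 => (0 < k)%N)); last first.
  by move=> k; rewrite leN andbT.
transitivity (\sum_(t : {ffun 'I_r -> 'I_N.+1} | [forall i, (0 < t i)%N])
   \sum_(k < N.+1 | (0 < k)%N)
     (if (\prod_i (t i : nat) %| k)%N then moebius (\prod_i (t i : nat)) else 0)).
  apply: eq_bigr => t /forallP pos.
  have m0 : (0 < \prod_i (t i : nat))%N by apply: prodn_gt0.
  rewrite (@my_floor_div R x N _ hN m0) -(cnt _ N m0) -[Posz _]intz sumMz mulr_sumr.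
  by apply: eq_bigr => k _; case: ifP; rewrite ?mulr1 ?mulr0.
rewrite exchange_big /=; apply: eq_bigr => k k0.
rewrite -big_mkcondr /=.
have := @core_sum k k0 N r (ltn_ord k); rewrite /omega => <-.
by [].
Qed.
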